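(* For every $n$, every linear 3-uniform hypergraph on $n$ vertices that contains neither $\mathcal{W}^3$ nor $F_7$ as an induced subgraph has at most $\frac{n^2}{9}$ edges; that is, $\mathrm{ex}_{\mathrm{lin,ind}}(n,\{\mathcal{W}^3,F_7\})\le \frac{n^2}{9}$. Moreover, equality holds for infinitely many $n$.
   Context: A 3-uniform hypergraph is linear if any two distinct edges share at most one vertex. $\mathrm{ex}_{\mathrm{lin,ind}}(n,\mathcal{G})$ is the maximum number of edges of an $n$-vertex linear 3-uniform hypergraph containing no member of $\mathcal{G}$ as an induced subgraph (a vertex subset whose induced subhypergraph is isomorphic to that member). Here $\mathcal{W}^3$ denotes the hypergraph on vertices $\{1,\dots,6\}$ with edges $\{1,2,3\},\{3,4,5\},\{5,6,1\}$ (a linear 3-cycle), and $F_7$ denotes the Fano plane: the hypergraph on the 7 nonzero vectors of $\mathbb{F}_2^3$ whose edges are the triples $\{x,y,z\}$ of distinct vectors with $x+y+z=0$. *)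

(* Defs.v *)
From HB Require Import structures.
From mathcomp Require Import all_boot all_order all_algebra.
Set Implicit Arguments. Unset Strict Implicit. Unset Printing Implicit Defensive.
Import GRing.Theory.

Definition uniform3 (V : finType) (E : {set {set V}}) : Prop :=
  forall e, e \in E -> #|e| = 3.

Definition linear_hg (V : finType) (E : {set {set V}}) : Prop :=
  forall e f, e \in E -> f \in E -> e != f -> #|e :&: f| <= 1.

(* H (on vertex type W) is an induced subhypergraph of G (on V): there is an
   injection f : W -> V such that a vertex subset S of W is an edge of H iff
   its image f(S) is an edge of G, i.e. the subhypergraph of G induced on
   f(W) is isomorphic to H via f. *)
Definition induced_sub (W V : finType) (H : {set {set W}}) (G : {set {set V}}) : Prop :=
  exists f : W -> V, injective f /\ forall S : {set W}, (S \in H) = (f @: S \in G).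

(* W^3 on vertices {1..6} (here 0..5): edges {1,2,3},{3,4,5},{5,6,1}. *)
Definition W3 : {set {set 'I_6}} :=
  [set [set (inord 0 : 'I_6); inord 1; inord 2];
       [set (inord 2 : 'I_6); inord 3; inord 4];
       [set (inord 4 : 'I_6); inord 5; inord 0]].

Definition fano_pt := {x : 'rV['F_2]_3 | x != 0%R}.

Definition F7 : {set {set fano_pt}} :=
  [set e : {set fano_pt} | [exists x : fano_pt, exists y : fano_pt, exists z : fano_pt,
     [&& e == [set x; y; z], x != y, y != z, x != z &
         (val x + val y + val z)%R == 0%R]]].

(* Main.v *)
Require Import Defs.
From mathcomp Require Import all_boot all_order all_algebra.
Set Implicit Arguments. Unset Strict Implicit. Unset Printing Implicit Defensive.
Import GRing.Theory.

Lemma third (V : finType) (E : {set {set V}}) e u v :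
  uniform3 E -> e \in E -> u \in e -> v \in e -> u != v ->
  exists t, [/\ e = [set u; v; t], t != u & t != v].
Proof.
move=> hu he hue hve huv.
have c3 := hu e he.
have c1 : #|e :\ u :\ v| == 1.
  have c2 : #|e :\ u| = 2 by have := cardsD1 u e; rewrite hue c3 add1n => -[<-].
  have := cardsD1 v (e :\ u); rewrite c2 !inE eq_sym huv hve /= add1n.
  by case=> <-.
case/cards1P: c1 => t ht.
have : t \in e :\ u :\ v by rewrite ht set11.
rewrite !inE => /and3P [tv tu te].
exists t; split=> //.
apply/setP=> x; rewrite ?inE.
move/setP: ht => /(_ x); rewrite !inE /=.
case: (eqVneq x u) => [->|xu]; first by rewrite hue.
case: (eqVneq x v) => [->|xv]; first by rewrite hve.
by move=> /= ->.
Qed.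

Lemma uniqE (V : finType) (E : {set {set V}}) e f u v :
  linear_hg E -> e \in E -> f \in E -> u != v ->
  u \in e -> v \in e -> u \in f -> v \in f -> e = f.
Proof.
move=> hl he hf uv ue ve uf vf; apply/eqP; apply: contraT => ne.
have := hl e f he hf ne; apply: contraTT => _; rewrite -ltnNge.
have : [set u; v] \subset e :&: f.
  by apply/subsetP=> x; rewrite !inE => /orP [] /eqP ->; rewrite ?ue ?ve ?uf ?vf.
move/subset_leq_card; by rewrite cards2 uv.
Qed.

Notation O6 k := (@Ordinal 6 k isT).


Lemma inord6 k (H : k < 6) : inord k = Ordinal H.
Proof. by apply/val_inj; rewrite /= inordK. Qed.

Lemma W3E : W3 = [set [set O6 0; O6 1; O6 2]; [set O6 2; O6 3; O6 4]; [set O6 4; O6 5; O6 0]].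
Proof.
by rewrite /W3 (inord6 (isT : 0 < 6)) (inord6 (isT : 1 < 6)) (inord6 (isT : 2 < 6))
  (inord6 (isT : 3 < 6)) (inord6 (isT : 4 < 6)) (inord6 (isT : 5 < 6)).
Qed.

Lemma card6 (S : {set 'I_6}) : #|S| = (O6 0 \in S) + (O6 1 \in S) + (O6 2 \in S) + (O6 3 \in S) + (O6 4 \in S) + (O6 5 \in S).
Proof.
rewrite -sum1_card big_mkcond /= !big_ord_recl big_ord0 /=.
rewrite addn0 !addnA.
rewrite (_ : lift ord0 (lift ord0 (lift ord0 (lift ord0 (lift ord0 ord0)))) = Ordinal (isT : 5 < 6)); last by apply/val_inj.
rewrite (_ : lift ord0 (lift ord0 (lift ord0 (lift ord0 ord0))) = Ordinal (isT : 4 < 6)); last by apply/val_inj.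
rewrite (_ : lift ord0 (lift ord0 (lift ord0 ord0)) = Ordinal (isT : 3 < 6)); last by apply/val_inj.
rewrite (_ : lift ord0 (lift ord0 ord0) = Ordinal (isT : 2 < 6)); last by apply/val_inj.
rewrite (_ : lift ord0 ord0 = Ordinal (isT : 1 < 6)); last by apply/val_inj.
rewrite (_ : ord0 = Ordinal (isT : 0 < 6)); last by apply/val_inj.
by repeat congr (_ + _); case: (_ \in S).
Qed.

Lemma set6P (S T : {set 'I_6}) :
  (O6 0 \in S) = (O6 0 \in T) -> (O6 1 \in S) = (O6 1 \in T) ->
  (O6 2 \in S) = (O6 2 \in T) -> (O6 3 \in S) = (O6 3 \in T) ->
  (O6 4 \in S) = (O6 4 \in T) -> (O6 5 \in S) = (O6 5 \in T) -> S = T.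
Proof.
move=> h0 h1 h2 h3 h4 h5; apply/setP => -[[|[|[|[|[|[|k]]]]]] H] //;
  by rewrite (bool_irrelevance H isT).
Qed.

Lemma pasch (V : finType) (E : {set {set V}}) p1 p2 p3 p4 p5 p6 :
  uniform3 E -> linear_hg E -> ~ induced_sub W3 E ->
  uniq [:: p1; p2; p3; p4; p5; p6] ->
  [set p1; p2; p3] \in E -> [set p3; p4; p5] \in E -> [set p5; p6; p1] \in E ->
  [set p2; p4; p6] \in E.
Proof.
move=> hu hl hW hq h1 h2 h3; apply/negPn/negP => h4; apply: hW.
pose s := [:: p1; p2; p3; p4; p5; p6].
pose f (i : 'I_6) := nth p1 s i.
have finj : injective f.
  by move=> i j /eqP; rewrite /f nth_uniq // => /eqP /val_inj.
exists f; split=> // S.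
have fE1 : f @: [set O6 0; O6 1; O6 2] = [set p1; p2; p3].
  by rewrite !(imsetU1, imsetU, imset_set1).
have fE2 : f @: [set O6 2; O6 3; O6 4] = [set p3; p4; p5].
  by rewrite !(imsetU1, imsetU, imset_set1).
have fE3 : f @: [set O6 4; O6 5; O6 0] = [set p5; p6; p1].
  by rewrite !(imsetU1, imsetU, imset_set1).
have fE4 : f @: [set O6 1; O6 3; O6 5] = [set p2; p4; p6].
  by rewrite !(imsetU1, imsetU, imset_set1).
rewrite W3E !inE.
case: (S =P _) => [->|n1]; first by rewrite fE1 h1.
case: (S =P _) => [->|n2]; first by rewrite fE2 h2.
case: (S =P _) => [->|n3]; first by rewrite fE3 h3.
apply/esym/negbTE/negP => hS.
have cS : #|S| = 3 by rewrite -(card_imset _ finj); exact: hu _ hS.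
have key : forall (A : {set 'I_6}) i j, f @: A \in E -> i \in A -> j \in A -> i != j ->
    i \in S -> j \in S -> S = A.
  move=> A i j hA iA jA ij iS jS; apply: (imset_inj finj).
  by apply: (uniqE (u := f i) (v := f j) hl hS hA); rewrite ?imset_f // (inj_eq finj).
have k1 : forall i j, i \in [set O6 0; O6 1; O6 2] -> j \in [set O6 0; O6 1; O6 2] -> i != j ->
   ~~ ((i \in S) && (j \in S)).
  move=> i j iA jA ij; apply/negP => /andP [iS jS]; apply: n1.
  by apply: (key _ i j) => //; rewrite fE1.
have k2 : forall i j, i \in [set O6 2; O6 3; O6 4] -> j \in [set O6 2; O6 3; O6 4] -> i != j ->
   ~~ ((i \in S) && (j \in S)).
  move=> i j iA jA ij; apply/negP => /andP [iS jS]; apply: n2.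
  by apply: (key _ i j) => //; rewrite fE2.
have k3 : forall i j, i \in [set O6 4; O6 5; O6 0] -> j \in [set O6 4; O6 5; O6 0] -> i != j ->
   ~~ ((i \in S) && (j \in S)).
  move=> i j iA jA ij; apply/negP => /andP [iS jS]; apply: n3.
  by apply: (key _ i j) => //; rewrite fE3.
have a01 : ~~ ((O6 0 \in S) && (O6 1 \in S)) by apply: k1; rewrite ?inE.
have a02 : ~~ ((O6 0 \in S) && (O6 2 \in S)) by apply: k1; rewrite ?inE.
have a12 : ~~ ((O6 1 \in S) && (O6 2 \in S)) by apply: k1; rewrite ?inE.
have a23 : ~~ ((O6 2 \in S) && (O6 3 \in S)) by apply: k2; rewrite ?inE.
have a24 : ~~ ((O6 2 \in S) && (O6 4 \in S)) by apply: k2; rewrite ?inE.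
have a34 : ~~ ((O6 3 \in S) && (O6 4 \in S)) by apply: k2; rewrite ?inE.
have a45 : ~~ ((O6 4 \in S) && (O6 5 \in S)) by apply: k3; rewrite ?inE.
have a40 : ~~ ((O6 4 \in S) && (O6 0 \in S)) by apply: k3; rewrite ?inE.
have a50 : ~~ ((O6 5 \in S) && (O6 0 \in S)) by apply: k3; rewrite ?inE.
move: cS; rewrite card6 => cS.
have SE : S = [set O6 1; O6 3; O6 5].
  move: a01 a02 a12 a23 a24 a34 a45 a40 a50 cS.
  case e0 : (O6 0 \in S); case e1 : (O6 1 \in S); case e2 : (O6 2 \in S);
  case e3 : (O6 3 \in S); case e4 : (O6 4 \in S); case e5 : (O6 5 \in S) => //= *;
  by apply: set6P; rewrite ?inE.
by move: h4; rewrite -fE4 -SE hS.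
Qed.

Notation O3 k := (@Ordinal 3 k isT).

Lemma F2_cases (u : 'F_2) : u = 0%R \/ u = 1%R.
Proof. case: u => [[|[|k]] Hk]; [left|right|]; try by apply/val_inj. by []. Qed.
Lemma addxx2 (u : 'F_2) : (u + u = 0)%R.
Proof. case: (F2_cases u) => ->. by rewrite addr0. apply/val_inj. reflexivity. Qed.
Lemma F2_eq (u v : 'F_2) : (u == 1%R) = (v == 1%R) -> u = v.
Proof. by case: (F2_cases u) => ->; case: (F2_cases v) => ->. Qed.
Lemma F2_sum (u v w : 'F_2) : (u + v + w = 0)%R -> (w == 1%R) = (u == 1%R) (+) (v == 1%R).
Proof.
by case: (F2_cases u) => ->; case: (F2_cases v) => ->; case: (F2_cases w) => ->; vm_compute.
Qed.
Lemma mxaddxx (x : 'rV['F_2]_3) : (x + x = 0)%R.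
Proof. by apply/rowP => j; rewrite !mxE addxx2. Qed.

Lemma mxeq (x y : 'rV['F_2]_3) : (x + y = 0)%R -> x = y.
Proof. by move=> h; rewrite -[x]addr0 -(mxaddxx y) addrA h add0r. Qed.
Lemma mxeq0 (x y : 'rV['F_2]_3) : (x + y = x)%R -> y = 0%R.
Proof. by move=> h; rewrite -[y]add0r -(mxaddxx x) -addrA h mxaddxx. Qed.

Definition bt (p : fano_pt) (j : 'I_3) : bool := (val p) ord0 j == 1%R.

Lemma ord3 (j : 'I_3) : [\/ j = O3 0, j = O3 1 | j = O3 2].
Proof.
case: j => -[|[|[|k]]] H //; [constructor 1|constructor 2|constructor 3]; exact: val_inj.
Qed.

Lemma fano_eq (p q : fano_pt) :
  bt p (O3 0) = bt q (O3 0) -> bt p (O3 1) = bt q (O3 1) -> bt p (O3 2) = bt q (O3 2) -> p = q.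
Proof.
move=> h0 h1 h2; apply/val_inj/rowP => j; 
by case: (ord3 j) => ->; apply: F2_eq.
Qed.

Lemma fano_nz (p : fano_pt) : [|| bt p (O3 0), bt p (O3 1) | bt p (O3 2)].
Proof.
apply/negPn/negP; rewrite !negb_or => /and3P [h0 h1 h2].
have : val p = 0%R.
  have g : forall j, ~~ bt p j -> val p ord0 j = 0%R.
    by move=> j; rewrite /bt; case: (F2_cases (val p ord0 j)) => ->.
  apply/rowP => j; rewrite mxE.
  by case: (ord3 j) => ->; apply: g.
by move/eqP; rewrite (negbTE (valP p)).
Qed.

Lemma fano_sum (p q r : fano_pt) j : (val p + val q + val r == 0)%R ->
  bt r j = bt p j (+) bt q j.
Proof.
move=> /eqP /rowP /(_ j); rewrite !mxE => h.
exact: F2_sum.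
Qed.

Lemma fano_line (p q : fano_pt) : p != q -> exists r, [set p; q; r] \in F7.
Proof.
move=> pq.
have nz : (val p + val q != 0)%R.
  apply: contra pq => /eqP h; apply/eqP/val_inj; exact: mxeq.
pose r : fano_pt := exist (fun x : 'rV['F_2]_3 => x != 0%R) _ nz.
exists r.
rewrite inE; apply/existsP; exists p; apply/existsP; exists q; apply/existsP; exists r.
rewrite eqxx pq /=.
apply/and3P; split.
- apply/eqP => /(congr1 val) /= h. move/eqP: (valP p); apply.
  by apply: (@mxeq0 (val q)); rewrite addrC.
- apply/eqP => /(congr1 val) /= h. move/eqP: (valP q); apply.
  exact: (@mxeq0 (val p)).
- by rewrite mxaddxx.
Qed.

Lemma perm3E (T : finType) (P : {set T} -> Prop) a b c : P [set a; b; c] ->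
  [/\ P [set a; c; b], P [set b; a; c], P [set b; c; a], P [set c; a; b] & P [set c; b; a]].
Proof.
have e1 : forall a b c : T, [set a; b; c] = [set a; c; b].
  by move=> a0 b0 c0; apply/setP => t; rewrite !inE; case: (t == a0); case: (t == b0); case: (t == c0).
have e2 : forall a b c : T, [set a; b; c] = [set b; a; c].
  by move=> a0 b0 c0; apply/setP => t; rewrite !inE; case: (t == a0); case: (t == b0); case: (t == c0).
move=> h; split.
- by rewrite -e1.
- by rewrite -e2.
- by rewrite -e1 -e2.
- by rewrite -e2 -e1.
- by rewrite -e1 -e2 -e1.
Qed.

Lemma fano_embed (V : finType) (E : {set {set V}}) (x y z w a b c : V) :
  uniform3 E -> linear_hg E -> uniq [:: x; y; z; w; a; b; c] ->
  [set x; y; z] \in E -> [set x; w; a] \in E -> [set y; w; b] \in E -> [set z; w; c] \in E ->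
  [set z; a; b] \in E -> [set y; a; c] \in E -> [set x; b; c] \in E ->
  induced_sub F7 E.
Proof.
move=> hu hl hq e1 e2 e3 e4 e5 e6 e7.
pose h (b0 b1 b2 : bool) : V :=
  if b2 then (if b0 then (if b1 then c else a) else (if b1 then b else w))
  else (if b0 then (if b1 then z else x) else (if b1 then y else x)).
have hinj : forall a0 a1 a2 b0 b1 b2 : bool, [|| a0, a1 | a2] -> [|| b0, b1 | b2] ->
    h a0 a1 a2 = h b0 b1 b2 -> [/\ a0 = b0, a1 = b1 & a2 = b2].
  move=> a0 a1 a2 b0 b1 b2.
  case: a0; case: a1; case: a2; case: b0; case: b1; case: b2 => //= _ _ ee;
  by move: hq; rewrite ee /= !inE !eqxx /= ?orbT ?andbF.
case: (@perm3E _ (fun A : {set V} => is_true (A \in E)) _ _ _ e1) => e1a e1b e1c e1d e1e.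
case: (@perm3E _ (fun A : {set V} => is_true (A \in E)) _ _ _ e2) => e2a e2b e2c e2d e2e.
case: (@perm3E _ (fun A : {set V} => is_true (A \in E)) _ _ _ e3) => e3a e3b e3c e3d e3e.
case: (@perm3E _ (fun A : {set V} => is_true (A \in E)) _ _ _ e4) => e4a e4b e4c e4d e4e.
case: (@perm3E _ (fun A : {set V} => is_true (A \in E)) _ _ _ e5) => e5a e5b e5c e5d e5e.
case: (@perm3E _ (fun A : {set V} => is_true (A \in E)) _ _ _ e6) => e6a e6b e6c e6d e6e.
case: (@perm3E _ (fun A : {set V} => is_true (A \in E)) _ _ _ e7) => e7a e7b e7c e7d e7e.
have hline : forall a0 a1 a2 b0 b1 b2 : bool, [|| a0, a1 | a2] -> [|| b0, b1 | b2] ->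
    ~~ [&& a0 == b0, a1 == b1 & a2 == b2] ->
    [set h a0 a1 a2; h b0 b1 b2; h (a0 (+) b0) (a1 (+) b1) (a2 (+) b2)] \in E.
  move=> a0 a1 a2 b0 b1 b2.
  by case: a0; case: a1; case: a2; case: b0; case: b1; case: b2.
pose f (p : fano_pt) := h (bt p (O3 0)) (bt p (O3 1)) (bt p (O3 2)).
have finj : injective f.
  move=> p q /hinj [] //; try exact: fano_nz.
  by move=> *; apply: fano_eq.
have dir1 : forall S, S \in F7 -> f @: S \in E.
  move=> S; rewrite inE => /existsP [p /existsP [q /existsP [r /and5P [/eqP -> pq qr pr sm]]]].
  rewrite !(imsetU1, imsetU, imset_set1) /f.
  rewrite !(fano_sum _ sm).
  apply: hline; try exact: fano_nz.
  apply: contra pq => /and3P [/eqP h0 /eqP h1 /eqP h2].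
  by apply/eqP; apply: fano_eq.
exists f; split=> // S; apply/idP/idP; first exact: dir1.
move=> hS.
have cS : #|S| = 3 by rewrite -(card_imset _ finj); exact: hu.
have : 1 < #|S| by rewrite cS.
case/card_gt1P => p [q [pS qS pq]].
case: (fano_line pq) => r hT.
have eT := dir1 _ hT.
suff -> : S = [set p; q; r] by [].
apply: (imset_inj finj).
apply: (uniqE (u := f p) (v := f q) hl hS eT); rewrite ?imset_f ?(inj_eq finj) //;
  by rewrite !inE eqxx ?orbT.
Qed.

Ltac neqs := rewrite /= ?inE ?negb_or; repeat (apply/andP; split); try done;
  try (rewrite eq_sym; done).

Lemma no3adj (V : finType) (E : {set {set V}}) x y z w fx fy fz :
  uniform3 E -> linear_hg E -> ~ induced_sub W3 E -> ~ induced_sub F7 E ->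
  x != y -> x != z -> y != z -> [set x; y; z] \in E -> w != x -> w != y -> w != z ->
  fx \in E -> x \in fx -> w \in fx ->
  fy \in E -> y \in fy -> w \in fy ->
  fz \in E -> z \in fz -> w \in fz -> False.
Proof.
move=> hu hl hW hF xy xz yz he wx wy wz hfx xfx wfx hfy yfy wfy hfz zfz wfz.
have hw : forall g, g \in E -> w \in g -> forall u v, u != v ->
    u \in [set x; y; z] -> v \in [set x; y; z] -> u \in g -> v \in g -> False.
  move=> g hg wg u v uv ue ve ug vg.
  have egE := uniqE hl he hg uv ue ve ug vg.
  by move: wg; rewrite -egE !inE (negbTE wx) (negbTE wy) (negbTE wz).
have xw : x != w by rewrite eq_sym.
have yw : y != w by rewrite eq_sym.
have zw : z != w by rewrite eq_sym.
have [a [fxE ax aw]] := third hu hfx xfx wfx xw.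
have [b [fyE yb bw]] := third hu hfy yfy wfy yw.
have [c [fzE zc cw]] := third hu hfz zfz wfz zw.
have ay : a != y.
  apply/negP => /eqP ay; apply: (hw fx hfx wfx x y xy); rewrite ?inE ?eqxx ?orbT //.
  by rewrite fxE -ay !inE eqxx ?orbT.
have az : a != z.
  apply/negP => /eqP az; apply: (hw fx hfx wfx x z xz); rewrite ?inE ?eqxx ?orbT //.
  by rewrite fxE -az !inE eqxx ?orbT.
have bx : b != x.
  apply/negP => /eqP bx; apply: (hw fy hfy wfy y x); rewrite 1?eq_sym ?inE ?eqxx ?orbT //.
  by rewrite fyE -bx !inE eqxx ?orbT.
have bz : b != z.
  apply/negP => /eqP bz; apply: (hw fy hfy wfy y z yz); rewrite ?inE ?eqxx ?orbT //.
  by rewrite fyE -bz !inE eqxx ?orbT.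
have cx : c != x.
  apply/negP => /eqP cx; apply: (hw fz hfz wfz z x); rewrite 1?eq_sym ?inE ?eqxx ?orbT //.
  by rewrite fzE -cx !inE eqxx ?orbT.
have cy : c != y.
  apply/negP => /eqP cy; apply: (hw fz hfz wfz z y); rewrite 1?eq_sym ?inE ?eqxx ?orbT //.
  by rewrite fzE -cy !inE eqxx ?orbT.
have wa : w != a by rewrite eq_sym.
have wb : w != b by rewrite eq_sym.
have ab : a != b.
  apply/negP => /eqP ab.
  have fxy : fx = fy.
    apply: (uniqE (u := w) (v := a) hl hfx hfy) => //.
    - by rewrite fxE !inE eqxx ?orbT.
    - by rewrite fyE ab !inE eqxx ?orbT.
  apply: (hw fx hfx wfx x y xy); rewrite ?inE ?eqxx ?orbT //.
  by rewrite fxy.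
have ac : a != c.
  apply/negP => /eqP ac.
  have fxz : fx = fz.
    apply: (uniqE (u := w) (v := a) hl hfx hfz) => //.
    - by rewrite fxE !inE eqxx ?orbT.
    - by rewrite fzE ac !inE eqxx ?orbT.
  apply: (hw fx hfx wfx x z xz); rewrite ?inE ?eqxx ?orbT //.
  by rewrite fxz.
have bc : b != c.
  apply/negP => /eqP bc.
  have fyz : fy = fz.
    apply: (uniqE (u := w) (v := b) hl hfy hfz) => //.
    - by rewrite fyE !inE eqxx ?orbT.
    - by rewrite fzE bc !inE eqxx ?orbT.
  apply: (hw fy hfy wfy y z yz); rewrite ?inE ?eqxx ?orbT //.
  by rewrite fyz.
have E1 := he; have E2 := hfx; have E3 := hfy; have E4 := hfz.
rewrite fxE in E2; rewrite fyE in E3; rewrite fzE in E4.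
case: (@perm3E _ (fun A : {set V} => is_true (A \in E)) _ _ _ E1) => E1a E1b E1c E1d E1e.
case: (@perm3E _ (fun A : {set V} => is_true (A \in E)) _ _ _ E2) => E2a E2b E2c E2d E2e.
case: (@perm3E _ (fun A : {set V} => is_true (A \in E)) _ _ _ E3) => E3a E3b E3c E3d E3e.
case: (@perm3E _ (fun A : {set V} => is_true (A \in E)) _ _ _ E4) => E4a E4b E4c E4d E4e.
have P1 := pasch hu hl hW (p1 := w) (p2 := a) (p3 := x) (p4 := z) (p5 := y) (p6 := b).
have P2 := pasch hu hl hW (p1 := w) (p2 := a) (p3 := x) (p4 := y) (p5 := z) (p6 := c).
have P3 := pasch hu hl hW (p1 := w) (p2 := b) (p3 := y) (p4 := x) (p5 := z) (p6 := c).
have Q1 : [set a; z; b] \in E by apply: P1 => //; neqs.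
have Q2 : [set a; y; c] \in E by apply: P2 => //; neqs.
have Q3 : [set b; x; c] \in E by apply: P3 => //; neqs.
case: (@perm3E _ (fun A : {set V} => is_true (A \in E)) _ _ _ Q1) => Q1a Q1b Q1c Q1d Q1e.
case: (@perm3E _ (fun A : {set V} => is_true (A \in E)) _ _ _ Q2) => Q2a Q2b Q2c Q2d Q2e.
case: (@perm3E _ (fun A : {set V} => is_true (A \in E)) _ _ _ Q3) => Q3a Q3b Q3c Q3d Q3e.
apply: hF; apply: (fano_embed (x := x) (y := y) (z := z) (w := w) (a := a) (b := b) (c := c)) => //.
neqs.
Qed.
Lemma sumbE (T : finType) (A : {set T}) : \sum_u ((u \in A) : nat) = #|A|.
Proof. rewrite -sum1_card [RHS]big_mkcond /=; apply: eq_bigr => u _; by case: (u \in A). Qed.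

Lemma cauchy (T : finType) (d : T -> nat) : (\sum_v d v) ^ 2 <= #|T| * \sum_v d v ^ 2.
Proof.
rewrite -(leq_pmul2l (isT : 0 < 2)).
have -> : 2 * (\sum_v d v) ^ 2 = \sum_i \sum_j 2 * (d i * d j).
  rewrite -mulnn big_distrl /= big_distrr /=; apply: eq_bigr => i _.
  by rewrite big_distrr /= big_distrr /=.
apply: (@leq_trans (\sum_i \sum_j (d i ^ 2 + d j ^ 2))).
  by apply: leq_sum => i _; apply: leq_sum => j _; case: (nat_Cauchy (d i) (d j)).
have sc : forall c, \sum_(j : T) c = #|T| * c.
  by move=> c; rewrite -sum_nat_const; apply: eq_bigl.
under eq_bigr => i _ do rewrite big_split /= sc.
rewrite big_split /= sc -big_distrr /=.
by rewrite mul2n -addnn.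
Qed.

Lemma sum3 (T : finType) (F : T -> nat) x y z : x != y -> x != z -> y != z ->
  \sum_(v in [set x; y; z]) F v = F x + F y + F z.
Proof.
move=> xy xz yz.
have -> : [set x; y; z] = x |: (y |: [set z]).
 by apply/setP => t; rewrite !inE orbA.
rewrite big_setU1 ?big_setU1 ?big_set1 ?addnA // ?inE ?negb_or ?xy ?xz.
  by rewrite /= addnA. by []. by [].
Qed.
Lemma sum_cond (T : finType) (A : {set T}) (P : pred T) : \sum_(f in A) (P f : nat) = #|[set f in A | P f]|.
Proof.
rewrite -sum1_card [RHS]big_mkcond [LHS]big_mkcond /=; apply: eq_bigr => f _; rewrite inE.
by case: (f \in A).
Qed.

Definition deg (V : finType) (E : {set {set V}}) v := #|[set f in E | v \in f]|.
Definition adj (V : finType) (E : {set {set V}}) v u :=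
  [exists f in E, (v \in f) && (u \in f)] && (v != u).

Lemma link (V : finType) (E : {set {set V}}) v : uniform3 E -> linear_hg E ->
  \sum_u (adj E v u : nat) = 2 * deg E v.
Proof.
move=> hu hl.
rewrite /deg -sum1_card big_distrr /=.
have step : forall f, f \in [set f in E | v \in f] -> 2 * 1 = \sum_u ((u \in f :\ v) : nat).
  move=> f; rewrite inE => /andP [fE vf].
  by rewrite sumbE; move: (cardsD1 v f); rewrite vf (hu f fE) add1n => -[<-].
rewrite (eq_bigr _ step) exchange_big /=; apply: eq_bigr => u _.
rewrite sum_cond.
case: (eqVneq v u) => [<-|vu].
  rewrite /adj eqxx andbF; apply/eqP; rewrite eq_sym cards_eq0; apply/eqP/setP => f.
  by rewrite !inE eqxx /= andbF.
set S := (X in _ = #|X|).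
have le1 : #|S| <= 1.
  apply/card_le1_eqP => f g; rewrite !inE => /andP [/andP [fE vf] /andP [uv uf]].
  move=> /andP [/andP [gE vg] /andP [_ ug]].
  exact: (uniqE (u := v) (v := u) hl gE fE).
have gt0 : (0 < #|S|) = adj E v u.
  rewrite /adj vu andbT card_gt0; apply/set0Pn/existsP => -[f].
    by rewrite !inE => /andP [/andP [fE vf] /andP [uv uf]]; exists f; rewrite fE vf uf.
  by move=> /andP [fE /andP [vf uf]]; exists f; rewrite !inE fE vf uf eq_sym vu.
by move: le1 gt0; case: (adj E v u); case: #|S| => [|[|]].
Qed.

Lemma sumconst (T : finType) c : \sum_(j : T) c = #|T| * c.
Proof. by rewrite -sum_nat_const; apply: eq_bigl. Qed.

Lemma edge_sum (V : finType) (E : {set {set V}}) e :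
  uniform3 E -> linear_hg E -> ~ induced_sub W3 E -> ~ induced_sub F7 E ->
  e \in E -> \sum_(v in e) deg E v <= #|V|.
Proof.
move=> hu hl hW hF he.
rewrite -(leq_pmul2l (isT : 0 < 2)) big_distrr /=.
under eq_bigr => v _ do rewrite -link //.
rewrite exchange_big /=.
apply: (@leq_trans (\sum_(u : V) 2)); last by rewrite sumconst mulnC.
apply: leq_sum => u _.
have : 1 < #|e| by rewrite hu.
case/card_gt1P => x [y [xe ye xy]].
have [z [eE zx zy]] := third hu he xe ye xy.
have xz : x != z by rewrite eq_sym.
have yz : y != z by rewrite eq_sym.
rewrite eE sum3 //.
case ax: (adj E x u); case ay: (adj E y u); case az: (adj E z u) => //.
move: ax ay az; rewrite /adj.
move=> /andP [/existsP [fx /andP [fxE /andP [xf uf]]] xu].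
move=> /andP [/existsP [fy /andP [fyE /andP [yf uf2]]] yu].
move=> /andP [/existsP [fz /andP [fzE /andP [zf uf3]]] zu].
rewrite eE in he.
have ux : u != x by rewrite eq_sym.
have uy : u != y by rewrite eq_sym.
have uz : u != z by rewrite eq_sym.
case: (no3adj hu hl hW hF xy xz yz he ux uy uz fxE xf uf fyE yf uf2 fzE zf uf3).
Qed.

Lemma dsum (V : finType) (E : {set {set V}}) (g : V -> nat) :
  \sum_v deg E v * g v = \sum_(f in E) \sum_(v in f) g v.
Proof.
rewrite /deg.
under eq_bigr => v _ do rewrite -sum_cond big_distrl /=.
rewrite exchange_big /=; apply: eq_bigr => f _.
by rewrite [RHS]big_mkcond /=; apply: eq_bigr => v _; case: (v \in f); rewrite ?mul1n.
Qed.

Lemma part1 (n : nat) (E : {set {set 'I_n}}) :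
  uniform3 E -> linear_hg E -> ~ induced_sub W3 E -> ~ induced_sub F7 E ->
  9 * #|E| <= n ^ 2.
Proof.
move=> hu hl hW hF.
case: (posnP #|E|) => [->|Epos]; first by rewrite muln0.
have sd : \sum_v deg E v = 3 * #|E|.
  have := dsum E (fun _ => 1).
  under eq_bigr => v _ do rewrite muln1.
  move=> ->.
  rewrite (eq_bigr (fun _ => 3)); first by rewrite sum_nat_const mulnC.
  by move=> f fE; rewrite sum1_card hu.
have sq : \sum_v deg E v ^ 2 <= #|E| * n.
  rewrite (eq_bigr (fun v => deg E v * deg E v)); last by move=> v _; rewrite mulnn.
  rewrite dsum -sum_nat_const leq_sum // => f fE.
  by have := edge_sum hu hl hW hF fE; rewrite card_ord.
have := cauchy (deg E); rewrite sd card_ord => h.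
have : 9 * #|E| * #|E| <= n ^ 2 * #|E|.
  apply: (leq_trans _ (leq_trans h _)).
    by rewrite expnMn -mulnA mulnn.
  by rewrite expnS expn1 -mulnA leq_mul2l (mulnC n #|E|) sq orbT.
by rewrite leq_pmul2r.
Qed.

Lemma c7 : #|{: fano_pt}| = 7.
Proof.
rewrite card_sig.
have -> : #|[pred x : 'rV['F_2]_3 | x != 0%R]| = #|predC1 (0%R : 'rV['F_2]_3)| by apply: eq_card.
by rewrite cardC1 card_mx card_Fp.
Qed.
Lemma card3 (T : finType) (x y z : T) : x != y -> x != z -> y != z -> #|[set x; y; z]| = 3.
Proof.
move=> xy xz yz.
have -> : [set x; y; z] = x |: [set y; z] by apply/setP => t; rewrite !inE orbA.
by rewrite cardsU1 cards2 !inE negb_or xy xz yz.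
Qed.

Definition mkE (G : finZmodType) (g : {ffun 'I_3 -> G}) : {set 'I_3 * G} :=
  [set (t, g t) | t : 'I_3].
Definition ZG (G : finZmodType) := [set g : {ffun 'I_3 -> G} | (\sum_t g t == 0)%R].
Definition EG (G : finZmodType) : {set {set 'I_3 * G}} := [set mkE g | g in ZG G].

Lemma memE (G : finZmodType) (g : {ffun 'I_3 -> G}) (x : 'I_3 * G) : (x \in mkE g) = (g x.1 == x.2).
Proof.
case: x => t v /=; apply/imsetP/eqP => [[t' _ [-> ->]] // | <-]; by exists t.
Qed.

Lemma mkE_inj (G : finZmodType) : injective (@mkE G).
Proof.
move=> g g' h; apply/ffunP => t.
have : (t, g t) \in mkE g' by rewrite -h memE.
by rewrite memE => /eqP.
Qed.

Lemma card_mkE (G : finZmodType) (g : {ffun 'I_3 -> G}) : #|mkE g| = 3.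
Proof.
rewrite card_imset ?card_ord //.
by move=> t t' [].
Qed.

Lemma sum_mkE (G : finZmodType) (g : {ffun 'I_3 -> G}) :
  (\sum_t g t = \sum_(w in mkE g) w.2)%R.
Proof.
rewrite big_imset /=; last by move=> t t' _ _ [].
by apply: eq_bigl.
Qed.

Lemma zsum3 (G : finZmodType) (T : finType) (F : T -> G) x y z : x != y -> x != z -> y != z ->
  (\sum_(v in [set x; y; z]) F v = F x + F y + F z)%R.
Proof.
move=> xy xz yz.
have -> : [set x; y; z] = x |: [set y; z] by apply/setP => t; rewrite !inE orbA.
rewrite big_setU1 /=; last by rewrite !inE negb_or xy xz.
by rewrite big_setU1 /= ?big_set1 ?addrA // inE.
Qed.

Lemma charE (G : finZmodType) (x y z : 'I_3 * G) : x != y -> x != z -> y != z ->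
  ([set x; y; z] \in EG G) =
  [&& x.1 != y.1, x.1 != z.1, y.1 != z.1 & (x.2 + y.2 + z.2 == 0)%R].
Proof.
move=> xy xz yz.
apply/idP/idP.
  case/imsetP => g gZ hE.
  have xi : x \in mkE g by rewrite -hE !inE eqxx.
  have yi : y \in mkE g by rewrite -hE !inE eqxx ?orbT.
  have zi : z \in mkE g by rewrite -hE !inE eqxx ?orbT.
  rewrite !memE in xi yi zi.
  have dp : forall a b : 'I_3 * G, a != b -> g a.1 == a.2 -> g b.1 == b.2 -> a.1 != b.1.
    move=> [a1 a2] [b1 b2] ab /= /eqP ea /eqP eb; apply: contra ab => /eqP e.
    by rewrite -ea -eb e.
  rewrite (dp x y) ?(dp x z) ?(dp y z) //=.
  by move: gZ; rewrite inE sum_mkE -hE zsum3.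
case/and4P => xy1 xz1 yz1 s0.
pose g := [ffun t => if t == x.1 then x.2 else if t == y.1 then y.2 else z.2].
have sub : [set x; y; z] \subset mkE g.
  apply/subsetP => w; rewrite !inE => /orP [/orP [] |] /eqP ->; rewrite memE ffunE ?eqxx //.
    by rewrite [y.1 == x.1]eq_sym (negbTE xy1) eqxx.
  by rewrite [z.1 == x.1]eq_sym (negbTE xz1) [z.1 == y.1]eq_sym (negbTE yz1) eqxx.
have eqg : mkE g = [set x; y; z].
  by apply/eqP; rewrite eq_sym eqEcard sub card3 // card_mkE.
apply/imsetP; exists g => //.
by rewrite inE sum_mkE eqg zsum3.
Qed.

Lemma EG_unif (G : finZmodType) : uniform3 (EG G).
Proof. by move=> e /imsetP [g _ ->]; rewrite card_mkE. Qed.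

Lemma agree (G : finZmodType) (g g' : {ffun 'I_3 -> G}) s t :
  g \in ZG G -> g' \in ZG G -> s != t -> g s = g' s -> g t = g' t -> g = g'.
Proof.
rewrite !inE => /eqP z1 /eqP z2 st es et; apply/ffunP => j.
case: (eqVneq j s) => [->//|js]; case: (eqVneq j t) => [->//|jt].
have ST : [set s; t; j] = [set: 'I_3].
  by apply/eqP; rewrite eqEcard subsetT cardsT card_ord card3 // eq_sym.
have e1 : (\sum_(i in [set s; t; j]) g i = 0)%R.
  by rewrite ST -[in RHS]z1; apply: eq_bigl => i; rewrite inE.
have e2 : (\sum_(i in [set s; t; j]) g' i = 0)%R.
  by rewrite ST -[in RHS]z2; apply: eq_bigl => i; rewrite inE.
rewrite !zsum3 1?eq_sym // 1?eq_sym // in e1 e2.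
by move: e1; rewrite -e2 es et => /addrI.
Qed.

Lemma EG_lin (G : finZmodType) : linear_hg (EG G).
Proof.
move=> e f /imsetP [g gZ ->] /imsetP [g' gZ' ->] ne.
apply/card_le1_eqP => a b; rewrite !inE !memE => /andP [ea fa] /andP [eb fb].
case: (eqVneq a.1 b.1) => [e1|n1].
  have a2b2 : a.2 = b.2 by rewrite -(eqP ea) -(eqP eb) e1.
  by move: e1 a2b2 {ea fa eb fb}; case: a => a1 a2; case: b => b1 b2 /= -> ->.
have := agree gZ gZ' n1 _ _; rewrite (eqP ea) (eqP fa) (eqP eb) (eqP fb) => /(_ erefl erefl) gg.
by rewrite gg eqxx in ne.
Qed.

Lemma EG_noF7 (G : finZmodType) : ~ induced_sub F7 (EG G).
Proof.
case=> f [finj hf].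
have pinj : injective (fun p => (f p).1).
  move=> p q e; apply/eqP; apply/negPn/negP => pq.
  case: (fano_line pq) => r hT.
  move: (hT); rewrite hf => /imsetP [g _ hE].
  have fp : f p \in mkE g by rewrite -hE imset_f // !inE eqxx.
  have fq : f q \in mkE g by rewrite -hE imset_f // !inE eqxx ?orbT.
  rewrite !memE in fp fq.
  have : f p = f q.
    by move: e fp fq; case: (f p) => a1 a2; case: (f q) => b1 b2 /= -> /eqP <- /eqP <-.
  by move/finj/eqP; rewrite (negbTE pq).
by have := leq_card _ pinj; rewrite c7 card_ord.
Qed.

Lemma pig3 (a b x y : 'I_3) : a != b -> x != a -> x != b -> y != a -> y != b -> x = y.
Proof.
by case: (ord3 a) => ->; case: (ord3 b) => ->; case: (ord3 x) => ->; case: (ord3 y) => ->.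
Qed.

Lemma tri (G : finZmodType) (c2 : forall x : G, (x + x = 0)%R) (A B C : G) :
  ((A + B) + (B + C) + (C + A) = 0)%R.
Proof. by rewrite (addrA (A + B)%R B C) -(addrA A B B) c2 addr0 (addrC C A) c2. Qed.

Lemma solve3 (G : finZmodType) (c2 : forall x : G, (x + x = 0)%R) (A P B : G) :
  (A + P + B = 0)%R -> P = (A + B)%R.
Proof.
move=> h; apply: (addrI (A + B)%R); rewrite c2 -h.
by rewrite addrAC.
Qed.

Lemma EG_noW3 (G : finZmodType) (c2 : forall x : G, (x + x = 0)%R) : ~ induced_sub W3 (EG G).
Proof.
case=> f [finj hf].
have m1 : [set O6 0; O6 1; O6 2] \in W3 by rewrite W3E !inE eqxx.
have m2 : [set O6 2; O6 3; O6 4] \in W3 by rewrite W3E !inE eqxx ?orbT.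
have m3 : [set O6 4; O6 5; O6 0] \in W3 by rewrite W3E !inE eqxx ?orbT.
have m4 : [set O6 1; O6 3; O6 5] \notin W3.
  rewrite W3E !inE.
  case: eqP => [/setP /(_ (O6 0))|_]; first by rewrite !inE.
  case: eqP => [/setP /(_ (O6 2))|_]; first by rewrite !inE.
  case: eqP => [/setP /(_ (O6 4))|_]; by rewrite ?inE.
have fE : forall i j k, f @: [set i; j; k] = [set f i; f j; f k].
  by move=> i j k; rewrite !(imsetU1, imsetU, imset_set1).
rewrite hf fE in m1; rewrite hf fE in m2; rewrite hf fE in m3; rewrite hf fE in m4.
have d : forall i j : 'I_6, i != j -> f i != f j by move=> i j; rewrite (inj_eq finj).
rewrite charE ?d // in m1; rewrite charE ?d // in m2; rewrite charE ?d // in m3.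
case/and4P: m1 => a01 a02 a12 s1.
case/and4P: m2 => a23 a24 a34 s2.
case/and4P: m3 => a45 a40 a50 s3.
have p1 : (f (O6 1)).1 = (f (O6 4)).1.
  apply: (pig3 (a := (f (O6 0)).1) (b := (f (O6 2)).1)) => //; rewrite 1?eq_sym //.
have p3 : (f (O6 3)).1 = (f (O6 0)).1.
  apply: (pig3 (a := (f (O6 2)).1) (b := (f (O6 4)).1)) => //; rewrite 1?eq_sym //.
have p5 : (f (O6 5)).1 = (f (O6 2)).1.
  apply: (pig3 (a := (f (O6 4)).1) (b := (f (O6 0)).1)) => //; rewrite 1?eq_sym //.
have : [set f (O6 1); f (O6 3); f (O6 5)] \in EG G.
  rewrite charE ?d // p1 p3 p5 (solve3 c2 (eqP s1)) (solve3 c2 (eqP s2)) (solve3 c2 (eqP s3)).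
  by rewrite tri // eqxx a40 a02 eq_sym a24.
by rewrite (negbTE m4).
Qed.

Lemma sum_ord3 (G : finZmodType) (h : 'I_3 -> G) :
  (\sum_t h t = h (O3 0) + h (O3 1) + h (O3 2))%R.
Proof.
rewrite -zsum3 //; apply: eq_bigl => i; rewrite !inE.
by case: (ord3 i) => ->.
Qed.

Definition phi2 (G : finZmodType) (ab : G * G) : {ffun 'I_3 -> G} :=
  [ffun t => if t == O3 0 then ab.1 else if t == O3 1 then ab.2 else (- (ab.1 + ab.2))%R].

Lemma card_EG (G : finZmodType) : #|EG G| = #|G| ^ 2.
Proof.
rewrite card_in_imset; last by move=> g g' _ _; apply: mkE_inj.
have inj2 : injective (@phi2 G).
  move=> [a b] [c d] /ffunP e; have := e (O3 0); have := e (O3 1).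
  by rewrite !ffunE /= => -> ->.
have -> : ZG G = (@phi2 G) @: [set: G * G].
  apply/setP => g; rewrite inE; apply/idP/imsetP.
    move=> /eqP s0; exists (g (O3 0), g (O3 1)); rewrite ?inE //.
    apply/ffunP => t; rewrite ffunE /=; case: (ord3 t) => -> //=.
    rewrite sum_ord3 in s0.
    by apply/eqP; rewrite -addr_eq0 addrC s0.
  move=> [ab _ ->]; rewrite sum_ord3 !ffunE /=.
  by rewrite subrr.
by rewrite card_imset // cardsT card_prod mulnn.
Qed.

Lemma transport (T : finType) (n : nat) (EGT : {set {set T}}) : #|T| = n ->
  uniform3 EGT -> linear_hg EGT -> ~ induced_sub W3 EGT -> ~ induced_sub F7 EGT ->
  exists E : {set {set 'I_n}},
    [/\ uniform3 E, linear_hg E, ~ induced_sub W3 E, ~ induced_sub F7 E & #|E| = #|EGT|].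
Proof.
move=> hT hu hl hW hF.
pose phi (x : T) : 'I_n := cast_ord hT (enum_rank x).
pose psi (i : 'I_n) : T := enum_val (cast_ord (esym hT) i).
have phiK : cancel phi psi by move=> x; rewrite /phi /psi cast_ordK enum_rankK.
have psiK : cancel psi phi by move=> i; rewrite /phi /psi enum_valK cast_ordKV.
have phiI := can_inj phiK.
have psiI := can_inj psiK.
have setI : injective (fun e : {set T} => phi @: e) by apply: imset_inj.
pose E : {set {set 'I_n}} := [set phi @: (e : {set T}) | e in EGT].
have ind : forall (W : finType) (H : {set {set W}}), induced_sub H E -> induced_sub H EGT.
  move=> W H [g [ginj hg]]; exists (psi \o g); split.
    by move=> a b /= /psiI /ginj.
  move=> S; rewrite hg.
  have -> : g @: S = phi @: ((psi \o g) @: S).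
    by rewrite -imset_comp; apply: eq_imset => w /=; rewrite psiK.
  by rewrite mem_imset.
exists E; split.
- by move=> e /imsetP [e0 he0 ->]; rewrite card_imset // hu.
- move=> e f /imsetP [e0 he0 ->] /imsetP [f0 hf0 ->] ne.
  rewrite -imsetI; last by move=> a b _ _; apply: phiI.
  rewrite card_imset //; apply: hl => //.
  by apply: contra ne => /eqP ->.
- by move/ind.
- by move/ind.
- by rewrite card_imset.
Qed.


Lemma c2F (m : nat) (x : 'rV['F_2]_m) : (x + x = 0)%R.
Proof. by apply/matrixP => i j; rewrite !mxE addxx2. Qed.

Theorem theorem15 :
  (forall (n : nat) (E : {set {set 'I_n}}),
      uniform3 E -> linear_hg E ->
      ~ induced_sub W3 E -> ~ induced_sub F7 E ->
      9 * #|E| <= n ^ 2)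
  /\
  (forall N : nat, exists n : nat, N <= n /\
     exists E : {set {set 'I_n}},
       [/\ uniform3 E, linear_hg E, ~ induced_sub W3 E, ~ induced_sub F7 E
         & 9 * #|E| = n ^ 2]).
Proof.
split; first exact: part1.
move=> N.
pose G : finZmodType := 'rV['F_2]_N.
have cG : #|G| = 2 ^ N by rewrite card_mx card_Fp // mul1n.
have cT : #|{: 'I_3 * G}| = 3 * 2 ^ N by rewrite card_prod card_ord cG.
have [E [h1 h2 h3 h4 h5]] :=
  transport cT (@EG_unif G) (@EG_lin G) (@EG_noW3 G (@c2F N)) (@EG_noF7 G).
exists (3 * 2 ^ N); split.
  apply: leq_trans (ltnW (ltn_expl N (isT : 1 < 2))) _; exact: leq_pmull.
exists E; split => //.
by rewrite h5 card_EG cG expnMn.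
Qed.
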